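(* For every integer $m\geq 3$, the graph $C_m[4]$ has a $C_m$-factorization, i.e. its edge set can be partitioned into $C_m$-factors.
   Context: For a graph $G$ and a positive integer $k$, $G[k]$ is the graph with vertex set $V(G)\times\{0,1,\dots,k-1\}$ in which $(u,i)$ and $(w,j)$ are adjacent if and only if $uw\in E(G)$. $C_m$ is the cycle of length $m$. A $C_k$-factor of a graph is a spanning subgraph each of whose components is a cycle of length $k$; a $C_k$-factorization is a partition of the edge set into $C_k$-factors. *)

(* Defs.v *)
From mathcomp Require Import all_boot.
Set Implicit Arguments. Unset Strict Implicit. Unset Printing Implicit Defensive.

(* A (simple) graph on a finite vertex type T is given by its adjacency
   relation; edges are unordered pairs {x,y} with adj x y (symmetric). *)

Definition cycle_adj (m : nat) : rel 'I_m :=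
  fun i j => (val j == (val i).+1 %% m) || (val i == (val j).+1 %% m).

Definition lexk (T : finType) (G : rel T) (k : nat) : rel (T * 'I_k) :=
  fun x y => G x.1 y.1.

(* c : seq T with uniq c and size c = k describes the k-cycle
   c_0 c_1 ... c_{k-1} c_0; its edges at x are x -- next c x, x -- prev c x. *)
Definition cyc_edge (T : eqType) (c : seq T) (x y : T) : bool :=
  (y == next c x) || (y == prev c x).

(* F (a spanning subgraph of G, given by its edge relation) is a C_k-factor
   of G: every edge of F is an edge of G, and every vertex v lies in a
   component of F which is a cycle of length k, i.e. there is a k-cycle c
   through v such that for every vertex x of c, the F-neighbours of x are
   exactly its two cycle-neighbours (so c is closed in F and the edges of F
   on c are exactly the cycle edges). *)
Definition is_Ck_factor (T : finType) (G : rel T) (k : nat) (F : rel T) : Prop :=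
  (forall x y, F x y -> G x y) /\
  (forall v : T, exists c : seq T,
     [/\ uniq c, size c = k, v \in c &
         forall x, x \in c -> forall y, F x y = cyc_edge c x y]).

Definition has_Ck_factorization (T : finType) (G : rel T) (k : nat) : Prop :=
  exists Fs : seq (rel T),
    (forall i, i < size Fs -> is_Ck_factor G k (nth (fun _ _ => false) Fs i)) /\
    (forall x y, G x y -> count (fun F : rel T => F x y) Fs = 1).

(* Main.v *)
Require Import Defs.
From mathcomp Require Import all_boot zify.
Set Implicit Arguments. Unset Strict Implicit. Unset Printing Implicit Defensive.

Definition xo (a b : 'I_4) : 'I_4 := Ordinal (ltn_pmod (Nat.lxor a b) (isT : 0 < 4)).
Definition fo (a : 'I_4) : 'I_4 := Ordinal (ltn_pmod (nth 0 [:: 0; 2; 3; 1] a) (isT : 0 < 4)).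

Lemma xoA a b c : xo a (xo b c) = xo (xo a b) c.
Proof. move: a b c; do 3!case=> [[|[|[|[|?]]]] ? //]; by apply/eqP. Qed.
Lemma xoC a b : xo a b = xo b a.
Proof. move: a b; do 2!case=> [[|[|[|[|?]]]] ? //]; by apply/eqP. Qed.
Lemma xo0 a : xo a ord0 = a.
Proof. move: a; do 1!case=> [[|[|[|[|?]]]] ? //]; by apply/eqP. Qed.
Lemma xoxx a : xo a a = ord0.
Proof. move: a; do 1!case=> [[|[|[|[|?]]]] ? //]; by apply/eqP. Qed.
Lemma xoK a b : xo (xo a b) b = a.
Proof. by rewrite -xoA xoxx xo0. Qed.

Definition Gs (s : nat) (k : 'I_4) : 'I_4 :=
  if s == 0 then k else if s == 1 then fo k else xo k (fo k).
Definition gsel (m u : nat) : nat :=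
  if odd m && (u == m - 2) then 1 else if odd m && (u == m - 1) then 2 else 0.
Definition dn m k u : 'I_4 := Gs (gsel m u) k.
Fixpoint Ss m k n : 'I_4 := if n is n'.+1 then xo (Ss m k n') (dn m k n') else ord0.

Definition K4 : seq 'I_4 := [:: @Ordinal 4 0 isT; @Ordinal 4 1 isT; @Ordinal 4 2 isT; @Ordinal 4 3 isT].

Lemma cnt s a b : count (fun k => b == xo a (Gs s k)) K4 = 1.
Proof.
rewrite /Gs; case: s => [|[|s]] /=;
move: a b; do 2!case=> [[|[|[|[|?]]]] ? //]; by vm_compute.
Qed.

Definition Fk m (k : 'I_4) : rel ('I_m * 'I_4) := fun x y =>
  ((y.1 == ordS x.1) && (y.2 == xo x.2 (dn m k x.1))) ||
  ((x.1 == ordS y.1) && (y.2 == xo x.2 (dn m k y.1))).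

Lemma SsE m k n : n <= m - 2 -> Ss m k n = if odd n then k else ord0.
Proof.
elim: n => [//|n IH] Hn /=.
have Hn' : n <= m - 2 by apply: ltnW.
rewrite IH // /dn /gsel.
have -> : (n == m - 2) = false by apply/negbTE; rewrite neq_ltn Hn.
have -> : (n == m - 1) = false.
  apply/negbTE; rewrite neq_ltn; apply/orP; left; apply: (leq_trans Hn); 
  by rewrite leq_sub2l.
rewrite !andbF /Gs /=; case: (odd n) => /=; first by rewrite xoxx.
by rewrite xoC xo0.
Qed.

Lemma Ssm m k : 3 <= m -> Ss m k m = ord0.
Proof.
move=> hm.
have Em : m = (m - 2).+2 by rewrite -addn2 subnK // ltnW.
have E1 : m - 1 = (m - 2).+1 by rewrite {1}Em subn1.
rewrite {2}Em /= SsE // /dn /gsel eqxx -E1 eqxx.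
have -> : (m - 1 == m - 2) = false by rewrite E1 (gtn_eqF (ltnSn _)).
have Eo : odd (m - 2) = odd m by rewrite {2}Em /= negbK.
rewrite Eo; case: (odd m) => /=.
  by rewrite /Gs /= xoxx.
by rewrite /Gs /= xoK.
Qed.

Lemma next_enum m (i : 'I_m) : next (enum 'I_m) i = ordS i.
Proof.
apply: val_inj; rewrite next_nth mem_enum /=.
have Hi : i \in enum 'I_m by rewrite mem_enum.
case E: (enum 'I_m) Hi => [//|y p] _.
have -> : nth y p (index i (y :: p)) = nth y (enum 'I_m) (index i (enum 'I_m)).+1 by rewrite E.
rewrite index_enum_ord.
case: (ltnP i.+1 m) => H.
  by rewrite nth_enum_ord // modn_small.
have Hm : i.+1 = m by apply/eqP; rewrite eqn_leq H ltn_ord.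
rewrite nth_default ?size_enum_ord ?Hm // modnn.
have := @nth_enum_ord m i 0 (leq_ltn_trans (leq0n _) (ltn_ord i)).
by rewrite E.
Qed.

Lemma prev_enum m (i : 'I_m) : prev (enum 'I_m) i = ord_pred i.
Proof.
by rewrite -{1}(ord_predK i) -next_enum prev_next // enum_uniq.
Qed.

Lemma notboth m (u w : 'I_m) : 3 <= m -> w = ordS u -> u = ordS w -> False.
Proof.
move=> hm Hw Hu.
have Hw' : val w = u.+1 %% m by rewrite Hw.
have Hu' : val u = w.+1 %% m by rewrite Hu.
have lu := ltn_ord u; have lw := ltn_ord w.
case: (ltnP u.+1 m) => H1.
  rewrite modn_small // in Hw'.
  case: (ltnP w.+1 m) => H2.
    by rewrite modn_small // Hw' in Hu'; move: Hu'; simpl; lia.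
  have : w.+1 = m by apply/eqP; rewrite eqn_leq H2 lw.
  move=> E; rewrite E modnn in Hu'.
  move: E hm Hw' Hu'; simpl; lia.
have E : u.+1 = m by apply/eqP; rewrite eqn_leq H1 lu.
rewrite E modnn in Hw'.
rewrite Hw' modn_small ?(leq_trans _ hm) // in Hu'.
by move: E hm Hu'; simpl; lia.
Qed.

Lemma factor m (k : 'I_4) : 3 <= m -> is_Ck_factor (@lexk _ (@cycle_adj m) 4) m (@Fk m k).
Proof.
move=> hm; split.
  move=> [u a] [w b]; rewrite /Fk /lexk /cycle_adj /=.
  by case/orP => /andP [H _]; apply/orP; [left|right].
move=> [u0 a0].
pose h (b : 'I_4) (i : 'I_m) := xo b (Ss m k i).
pose b := xo a0 (Ss m k u0).
pose phi i := (i, h b i).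
have phi_inj : injective phi by move=> i j [].
have hS i : h b (ordS i) = xo (h b i) (dn m k i).
  rewrite /h -xoA; congr xo.
  case: (ltnP i.+1 m) => H /=.
    by rewrite modn_small.
  have Hm : i.+1 = m by apply/eqP; rewrite eqn_leq H ltn_ord.
  rewrite Hm modnn /=; symmetry; change (Ss m k i.+1 = ord0); by rewrite Hm Ssm.
exists [seq phi i | i <- enum 'I_m]; split.
- by rewrite map_inj_uniq // enum_uniq.
- by rewrite size_map size_enum_ord.
- have -> : (u0, a0) = phi u0 by rewrite /phi /h /b xoK.
  by apply: map_f; rewrite mem_enum.
move=> x /mapP [i _ ->] [w a].
rewrite /cyc_edge (next_map phi_inj (enum_uniq 'I_m)) (prev_map phi_inj (enum_uniq 'I_m)) next_enum prev_enum.
rewrite /Fk /phi /= !xpair_eqE hS.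
congr orb.
have -> : (i == ordS w) = (w == ord_pred i).
  apply/eqP/eqP => [->|->]; [by rewrite ordSK | by rewrite ord_predK].
case: eqP => [->|] //=.
by rewrite -{1}(ord_predK i) hS xoK.
Qed.

Theorem mainTheorem3 (m : nat) (hm : 3 <= m) :
  has_Ck_factorization (@lexk _ (@cycle_adj m) 4) m.
Proof.
exists [seq @Fk m k | k <- K4]; split.
  move=> i; rewrite size_map => Hi.
  rewrite (nth_map ord0) //.
  exact: factor.
move=> [u a] [w b]; rewrite /lexk /cycle_adj count_map => Hadj.
have Hd : (w == ordS u) || (u == ordS w) by exact: Hadj.
case/orP: Hd => [/eqP Hw | /eqP Hu].
- have Hn : (u == ordS w) = false by apply/negbTE/eqP => Hu; exact: (notboth hm Hw Hu).
  rewrite -[RHS](cnt (gsel m u) a b); apply: eq_count => k.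
  by rewrite /Fk /= Hn andFb orbF {1}Hw eqxx.
- have Hn : (w == ordS u) = false by apply/negbTE/eqP => Hw; exact: (notboth hm Hw Hu).
  rewrite -[RHS](cnt (gsel m w) a b); apply: eq_count => k.
  by rewrite /Fk /= Hn /= {1}Hu eqxx.
Qed.
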